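(* Let $n\in\mathbb{N}$, $H\in\mathbb{R}^{n\times n}$, $W\in\mathbb{R}^{n\times n}$ with $W\succ 0$, let $C=\mathrm{diag}(C_{11},\dots,C_{nn})$ be diagonal with all $C_{ii}\neq 0$, and let $V=\mathrm{diag}(\sigma_1^2,\dots,\sigma_n^2)$ with all $\sigma_i>0$. Assume $(H,C)$ is observable and $(H,D)$ is controllable, where $W=DD^T$. Let $\Sigma$ be the unique positive semidefinite solution of the discrete algebraic Riccati equation $$\Sigma = H\Sigma H^T - H\Sigma C^T(C\Sigma C^T+V)^{-1}C\Sigma H^T + W .$$ Then $$\mathrm{tr}\,W+\frac{\sigma_u^2\,\mathrm{tr}(H^TH)\,\lambda_n(W)}{\sigma_u^2+\lambda_n(W)C_u^2}\;\le\;\mathrm{tr}\,\Sigma\;\le\;\mathrm{tr}\,W+\frac{\sigma_l^2\,\mathrm{tr}(H^TH)}{C_l^2}.$$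
   Context: This models a linear system $x(k+1)=Hx(k)+w(k)$, $w(k)\sim\mathcal N(0,W)$, whose outputs $Cx(k)$ are privatized by adding Gaussian noise $v(k)\sim\mathcal N(0,V)$ before being processed by a steady-state Kalman filter; $\Sigma$ is the steady-state a priori error covariance, and $\mathrm{tr}\,\Sigma$ equals the steady-state mean squared prediction error. For a symmetric matrix $K$, $\lambda_n(K)\le\dots\le\lambda_1(K)$ denote its eigenvalues. Indices: $l:=\arg\min_{1\le i\le n} C_{ii}^2/\sigma_i^2$ and $u:=\arg\max_{1\le i\le n} C_{ii}^2/\sigma_i^2$; $C_l:=C_{ll}$, $C_u:=C_{uu}$, and $\sigma_l,\sigma_u$ are the corresponding $\sigma_i$. Thus $\lambda_n(C^TV^{-1}C)=C_l^2/\sigma_l^2$ and $\lambda_1(C^TV^{-1}C)=C_u^2/\sigma_u^2$. *)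

(* Defs.v *)
From HB Require Import structures.
From mathcomp Require Import all_boot all_order all_algebra.
Set Implicit Arguments. Unset Strict Implicit. Unset Printing Implicit Defensive.
Import Order.TTheory GRing.Theory Num.Theory.
Local Open Scope ring_scope.

Definition controllable (R : fieldType) (n m : nat)
  (H : 'M[R]_n) (D : 'M[R]_(n, m)) : bool :=
  \rank (\mxrow_(k < n) (H ^+ k *m D)) == n.

Definition observable (R : fieldType) (n p : nat)
  (H : 'M[R]_n) (C : 'M[R]_(p, n)) : bool :=
  \rank (\mxcol_(k < n) (C *m H ^+ k)) == n.

Definition posdef (R : numFieldType) (n : nat) (A : 'M[R]_n) : Prop :=
  A^T = A /\ forall x : 'cV[R]_n, x != 0 -> 0 < (x^T *m A *m x) 0 0.

Definition possemidef (R : numFieldType) (n : nat) (A : 'M[R]_n) : Prop :=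
  A^T = A /\ forall x : 'cV[R]_n, 0 <= (x^T *m A *m x) 0 0.

Definition is_min_eigenvalue (R : numFieldType) (n : nat) (A : 'M[R]_n) (lam : R)
  : Prop :=
  eigenvalue A lam /\ forall b, eigenvalue A b -> (lam <= b)%R.

(* Main.v *)
Require Import Defs.
From HB Require Import structures.
From mathcomp Require Import all_boot all_order all_algebra.
From mathcomp Require Import spectral sesquilinear complex.
Import Order.TTheory GRing.Theory Num.Theory.
Local Open Scope ring_scope.
From mathcomp.algebra_tactics Require Import ring lra.
Lemma quad_min (R : rcfType) (n : nat) (W : 'M[R]_n) (lam : R) :
  W^T = W -> (forall b, eigenvalue W b -> lam <= b) ->
  forall x : 'cV[R]_n, lam * (x^T *m x) 0 0 <= (x^T *m W *m x) 0 0.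
Proof.
move=> Wsym Hlam x.
pose f := real_complex R.
pose Wc := map_mx f W.
have Wc_herm : Wc \is hermsymmx.
  rewrite is_hermitianmxE expr0 scale1r; apply/eqP/matrixP=> i j.
  by rewrite !mxE -[in LHS]Wsym mxE; exact/esym/conjc_real.
have /orthomx_spectralP Weq := hermitian_normalmx Wc_herm.
set P := spectralmx Wc in Weq; set d := spectral_diag Wc in Weq.
have Pu : P \is unitarymx := spectral_unitarymx _.
have Pinv : invmx P = (map_mx Num.conj (P^T)) := invmx_unitary Pu.
have Punit : P \in unitmx := spectral_unit _.
have dreal := hermitian_spectral_diag_real Wc_herm.
have Hd : forall i, lam <= complex.Re (d 0 i).
  move=> i; apply: Hlam.
  rewrite eigenvalue_root_char -(fmorph_root f) map_char_poly -eigenvalue_root_char.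
  change (eigenvalue Wc ((complex.Re (d 0 i))%:C)%C); rewrite RRe_real; last exact: (mxOverP dreal).
  apply/eigenvalueP; exists (row i P).
    rewrite -row_mul Weq !mulmxA mulmxV // mul1mx.
    apply/rowP=> j; rewrite !mxE (bigD1 i) //= big1 ?addr0.
      by rewrite !mxE eqxx mulr1n.
    by move=> k /negbTE ki; rewrite !mxE eq_sym ki mulr0n mul0r.
  apply/eqP=> /(congr1 (mulmx^~ (map_mx Num.conj (P^T)))).
  rewrite -row_mul (unitarymxP Pu) mul0mx => /rowP /(_ i).
  by rewrite !mxE eqxx /= => /eqP; rewrite oner_eq0.
pose y := P *m (map_mx f x).
have xcT : (map_mx f x)^T = (map_mx Num.conj ((map_mx f x)^T)).
  by apply/matrixP=> i j; rewrite !mxE; exact/esym/conjc_real.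
have yT : (map_mx f x)^T *m (map_mx Num.conj (P^T)) = (map_mx Num.conj (y^T)).
  rewrite xcT /y trmx_mul map_mxM; congr (_ *m _).
have E1 : f ((x^T *m W *m x) 0 0) = \sum_i d 0 i * (y i 0 * (y i 0)^*)%C.
  have -> : f ((x^T *m W *m x) 0 0) = (map_mx f (x^T *m W *m x)) 0 0 by rewrite !mxE.
  rewrite !map_mxM -map_trmx -/Wc Weq Pinv !mulmxA yT.
  rewrite -!mulmxA mulmxA mul_mx_diag [in LHS]mxE.
  apply: eq_bigr => i _; rewrite !mxE.
  by rewrite -mulrA mulrCA; congr (_ * _); rewrite mulrC.
have E2 : f ((x^T *m x) 0 0) = \sum_i (y i 0 * (y i 0)^*)%C.
  have -> : f ((x^T *m x) 0 0) = (map_mx f (x^T *m x)) 0 0 by rewrite !mxE.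
  rewrite !map_mxM -map_trmx.
  have Ex : map_mx f x = invmx P *m y by rewrite /y mulKmx.
  rewrite [in X in _ *m X]Ex Pinv mulmxA yT mxE.
  by apply: eq_bigr => i _; rewrite !mxE mulrC.
have fM : forall a b : R, f (a * b) = f a * f b by move=> a b; exact: rmorphM.
rewrite -lecR -/f fM E1 E2 mulr_sumr; apply: ler_sum => i _.
apply: ler_wpM2r; first exact: mulcJ_ge0.
have -> : d 0 i = f (complex.Re (d 0 i)) by rewrite /f RRe_real //; exact: (mxOverP dreal).
by rewrite /f lecR.
Qed.
Lemma zmod_id (V : zmodType) (s x y z q : V) : s - x - y + z - (z - x - y + q) = s - q.
Proof. by rewrite !opprD !opprK -!addrA; congr (_ + _); rewrite addNKr addrCA !addKr. Qed.
Lemma key_id (R : comRingType) (n : nat) (S C V K N : 'M[R]_n) :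
  S^T = S -> N^T = N -> (C *m S *m C^T + V) *m N = 1%:M -> N *m (C *m S *m C^T + V) = 1%:M ->
  S - S *m C^T *m N *m (C *m S) =
  (1%:M - K *m C) *m S *m (1%:M - K *m C)^T + K *m V *m K^T
  - (K - S *m C^T *m N) *m (C *m S *m C^T + V) *m (K - S *m C^T *m N)^T.
Proof.
move=> Ssym Nsym MN NM.
set M := C *m S *m C^T + V in MN NM *.
set G := S *m C^T.
have GT : G^T = C *m S by rewrite /G trmx_mul trmxK Ssym.
have A : (1%:M - K *m C) *m S *m (1%:M - K *m C)^T + K *m V *m K^T
   = S - K *m G^T - G *m K^T + K *m M *m K^T.
  rewrite linearB /= trmx1 trmx_mul.
  rewrite mulmxBl mul1mx mulmxDr mulmxN mulmx1 mulmxBl GT /M /G.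
  rewrite mulmxDr mulmxDl !mulmxA.
  by rewrite opprB !addrA; congr (_ + _); rewrite addrAC.
have B : (K - G *m N) *m M *m (K - G *m N)^T
   = K *m M *m K^T - K *m G^T - G *m K^T + G *m N *m G^T.
  rewrite linearB /= trmx_mul Nsym mulmxBl mulmxDr mulmxN.
  rewrite -(mulmxA G N M) NM mulmx1 !mulmxBl !mulmxA -(mulmxA K M N) MN mulmx1.
  by rewrite opprB addrA addrAC [_ - G *m K^T - _]addrAC.
by rewrite -/G A B GT zmod_id mulmxA.
Qed.
Lemma SL1 (R : rcfType) (lam s c x z : R) : 0 < lam -> 0 < s ->
  lam * s / (s + lam * c ^+ 2) * x ^+ 2 <= lam * (x - c * z) ^+ 2 + s * z ^+ 2.
Proof.
move=> hl hs.
have hD : 0 < s + lam * c ^+ 2 by have := sqr_ge0 c; nra.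
rewrite mulrAC ler_pdivrMr //.
have := sqr_ge0 (lam * c * x - (s + lam * c ^+ 2) * z).
lra.
Qed.

Lemma SL2 (R : rcfType) (lam s c su cu : R) : 0 < lam -> 0 < s -> 0 < su ->
  c ^+ 2 / s <= cu ^+ 2 / su ->
  lam * su / (su + lam * cu ^+ 2) <= lam * s / (s + lam * c ^+ 2).
Proof.
move=> hl hs hsu h.
have hD : 0 < s + lam * c ^+ 2 by have := sqr_ge0 c; nra.
have hDu : 0 < su + lam * cu ^+ 2 by have := sqr_ge0 cu; nra.
rewrite ler_pdivrMr // mulrAC ler_pdivlMr //.
rewrite ler_pdivrMr // mulrAC ler_pdivlMr // in h.
nra.
Qed.

Lemma SL3 (R : rcfType) (s c sl cl x : R) : 0 < s -> 0 < sl -> c != 0 -> cl != 0 ->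
  cl ^+ 2 / sl ^+ 2 <= c ^+ 2 / s ^+ 2 ->
  s ^+ 2 * (c^-1 * x) ^+ 2 <= sl ^+ 2 / cl ^+ 2 * x ^+ 2.
Proof.
move=> hs hsl hc hcl h.
have hc2 : 0 < c ^+ 2 by rewrite exprn_even_gt0.
have hcl2 : 0 < cl ^+ 2 by rewrite exprn_even_gt0.
have hs2 : 0 < s ^+ 2 by rewrite exprn_gt0.
have hsl2 : 0 < sl ^+ 2 by rewrite exprn_gt0.
have hAB : s ^+ 2 / c ^+ 2 <= sl ^+ 2 / cl ^+ 2.
  rewrite ler_pdivrMr // mulrAC ler_pdivlMr //.
  rewrite ler_pdivrMr // mulrAC ler_pdivlMr // in h.
  nra.
rewrite exprMn exprVn mulrA.
apply: ler_wpM2r => //; exact: sqr_ge0.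
Qed.
Section QF.
Context {R : rcfType}.
Context {n : nat}.
Definition qf (A : 'M[R]_n) (x : 'cV[R]_n) := (x^T *m A *m x) 0 0.

Lemma qf_mul (B X : 'M[R]_n) x : qf (B *m X *m B^T) x = qf X (B^T *m x).
Proof. by rewrite /qf trmx_mul trmxK !mulmxA. Qed.

Lemma qfD (A B : 'M[R]_n) x : qf (A + B) x = qf A x + qf B x.
Proof. by rewrite /qf mulmxDr mulmxDl mxE. Qed.

Lemma qfB (A B : 'M[R]_n) x : qf (A - B) x = qf A x - qf B x.
Proof. by rewrite /qf mulmxBr mulmxBl mxE !mxE. Qed.

Lemma qf_diag (d : 'rV[R]_n) x : qf (diag_mx d) x = \sum_i d 0 i * x i 0 ^+ 2.
Proof.
rewrite /qf mul_mx_diag mxE; apply: eq_bigr => i _; rewrite !mxE; ring.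
Qed.

Lemma qf1 x : qf 1%:M x = \sum_i x i 0 ^+ 2.
Proof.
rewrite /qf mulmx1 mxE; apply: eq_bigr => i _; rewrite !mxE; ring.
Qed.

Lemma qf0 A : qf A 0 = 0.
Proof. by rewrite /qf mulmx0 mxE. Qed.

Lemma qf1_ge0 x : 0 <= qf 1%:M x.
Proof. by rewrite qf1 sumr_ge0 // => i _; exact: sqr_ge0. Qed.

Lemma tr_qf m (H : 'M[R]_(m, n)) (A : 'M[R]_n) :
  \tr (H *m A *m H^T) = \sum_j qf A (row j H)^T.
Proof.
rewrite /mxtrace; apply: eq_bigr => j _.
by rewrite /qf trmxK -row_mul !mxE; apply: eq_bigr => k _; rewrite !mxE.
Qed.
End QF.

Theorem theorem1 (R : rcfType) (n m : nat) (Hn : (0 < n)%N)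
  (H W C V Sigma : 'M[R]_n) (D : 'M[R]_(n, m)) (sig : 'I_n -> R)
  (lam : R) (l u : 'I_n) :
  posdef W -> W = D *m D^T ->
  is_diag_mx C -> (forall i, C i i != 0) ->
  (forall i, 0 < sig i) -> V = diag_mx (\row_i (sig i ^+ 2)) ->
  observable H C -> controllable H D ->
  possemidef Sigma ->
  Sigma = H *m Sigma *m H^T
          - H *m Sigma *m C^T *m invmx (C *m Sigma *m C^T + V) *m C *m Sigma *m H^T
          + W ->
  is_min_eigenvalue W lam ->
  (forall i, C l l ^+ 2 / sig l ^+ 2 <= C i i ^+ 2 / sig i ^+ 2) ->
  (forall i, C i i ^+ 2 / sig i ^+ 2 <= C u u ^+ 2 / sig u ^+ 2) ->
  \tr W + sig u ^+ 2 * \tr (H^T *m H) * lam / (sig u ^+ 2 + lam * C u u ^+ 2)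
    <= \tr Sigma /\
  \tr Sigma <= \tr W + sig l ^+ 2 * \tr (H^T *m H) / C l l ^+ 2.
Proof.
move=> [Wsym Wpd] _ Cdiag Cnz sigp hV _ _ [Ssym Spsd] hdare [lamE lamMin] hl hu.
have Ceq : C = diag_mx (\row_i C i i).
  apply/matrixP=> i j; rewrite !mxE; case: (eqVneq i j) => [->|ij]; first by rewrite mulr1n.
  by rewrite mulr0n; apply/(is_diag_mxP Cdiag).
have CT : C^T = C by rewrite Ceq tr_diag_mx.
have VT : V^T = V by rewrite hV tr_diag_mx.
have qfV : forall y, qf V y = \sum_i sig i ^+ 2 * y i 0 ^+ 2.
  by move=> y; rewrite hV qf_diag; apply: eq_bigr => i _; rewrite mxE.
have qfV_ge0 : forall y, 0 <= qf V y.
  move=> y; rewrite qfV sumr_ge0 // => i _; apply: mulr_ge0; exact: sqr_ge0.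
pose M := C *m Sigma *m C^T + V.
have qfM : forall y, qf M y = qf Sigma (C^T *m y) + qf V y.
  by move=> y; rewrite qfD qf_mul.
have qfM_ge0 : forall y, 0 <= qf M y.
  by move=> y; rewrite qfM; apply: addr_ge0; [exact: Spsd | exact: qfV_ge0].
have Munit : M \in unitmx.
  rewrite unitmxE unitfE; apply/negP => /det0P [v vnz vM].
  have : qf M v^T = 0 by rewrite /qf trmxK vM mul0mx mxE.
  rewrite qfM qfV => /eqP; rewrite paddr_eq0; first last.
  - by apply: sumr_ge0 => i _; apply: mulr_ge0; exact: sqr_ge0.
  - exact: Spsd.
  case/andP=> _ /eqP /psumr_eq0P H0.
  apply: (negP vnz); apply/eqP/rowP => i; rewrite mxE.
  have := H0 (fun i _ => mulr_ge0 (sqr_ge0 _) (sqr_ge0 _)) i isT; rewrite mxE.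
  move/eqP; rewrite mulf_eq0 !expf_eq0 /= (gt_eqF (sigp i)) /=.
  by move/eqP.
pose N := invmx M.
have MN : M *m N = 1%:M by rewrite mulmxV.
have NM : N *m M = 1%:M by rewrite mulVmx.
have Msym : M^T = M by rewrite /M linearD /= VT !trmx_mul trmxK Ssym mulmxA.
have Nsym : N^T = N by rewrite /N trmx_inv Msym.
pose G := Sigma *m C^T.
pose P := Sigma - G *m N *m (C *m Sigma).
have hdare' : Sigma = H *m P *m H^T + W.
  rewrite {1}hdare /P /G /N /M mulmxBr mulmxBl !mulmxA //.
have Pkey := fun K => @key_id _ _ Sigma C V K N Ssym Nsym MN NM.
have qfP : forall K x, qf P x = qf Sigma ((1%:M - K *m C)^T *m x) + qf V (K^T *m x)
     - qf M ((K - G *m N)^T *m x).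
  by move=> K x; rewrite /P /G (Pkey K) qfB qfD !qf_mul.
have qfP_ge0 : forall x, 0 <= qf P x.
  move=> x; rewrite (qfP (G *m N)) subrr trmx0 mul0mx qf0 subr0.
  by apply: addr_ge0; [exact: Spsd | exact: qfV_ge0].
have qfS : forall w, qf W w <= qf Sigma w.
  by move=> w; rewrite {1}hdare' qfD qf_mul lerDr.
have lam_gt0 : 0 < lam.
  case/eigenvalueP: lamE => v vW vnz.
  have vT0 : v^T != 0.
    by apply/eqP => /(congr1 trmx); rewrite trmxK trmx0 => v0; rewrite v0 eqxx in vnz.
  have := Wpd _ vT0; rewrite trmxK vW -scalemxAl mxE.
  have : 0 <= (v *m v^T) 0 0.
    by rewrite mxE sumr_ge0 // => i _; rewrite mxE -expr2 sqr_ge0.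
  nra.
have qfW : forall w, lam * qf 1%:M w <= qf W w.
  by move=> w; rewrite /qf mulmx1; exact: quad_min.
have Cz : forall z : 'cV[R]_n, forall i, (C *m z) i 0 = C i i * z i 0.
  by move=> z i; rewrite {1}Ceq mul_diag_mx !mxE.
pose a := lam * sig u ^+ 2 / (sig u ^+ 2 + lam * C u u ^+ 2).
have lower : forall x, a * qf 1%:M x <= qf P x.
  move=> x; rewrite (qfP (G *m N)) subrr trmx0 mul0mx qf0 subr0.
  set z := (G *m N)^T *m x.
  have -> : (1%:M - G *m N *m C)^T *m x = x - C *m z.
    by rewrite linearB /= trmx1 trmx_mul CT mulmxBl mul1mx mulmxA.
  apply: le_trans (lerD (le_trans (qfW _) (qfS _)) (lexx _)).
  rewrite qf1 qfV qf1 mulr_sumr mulr_sumr -big_split /=; apply: ler_sum => i _.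
  rewrite [(x - _) i 0]mxE [(- (C *m z)) i 0]mxE Cz.
  apply: le_trans (@SL1 _ lam (sig i ^+ 2) (C i i) (x i 0) (z i 0) lam_gt0 (exprn_gt0 2 (sigp i))).
  apply: ler_wpM2r; first exact: sqr_ge0.
  exact: (@SL2 _ _ _ _ _ _ lam_gt0 (exprn_gt0 2 (sigp i)) (exprn_gt0 2 (sigp u)) (hu i)).
pose b := sig l ^+ 2 / C l l ^+ 2.
pose Ci := diag_mx (\row_i (C i i)^-1).
have CiC : Ci *m C = 1%:M.
  rewrite /Ci {2}Ceq mulmx_diag; apply/matrixP => i j; rewrite !mxE.
  by case: (eqVneq i j) => [->|_]; rewrite ?mulr1n ?mulr0n // mulVf.
have upper : forall x, qf P x <= b * qf 1%:M x.
  move=> x; rewrite (qfP Ci) CiC subrr trmx0 mul0mx qf0 add0r.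
  apply: le_trans (lerB (lexx _) (qfM_ge0 _)) _; rewrite subr0.
  rewrite qfV qf1 mulr_sumr; apply: ler_sum => i _.
  rewrite /Ci tr_diag_mx mul_diag_mx !mxE.
  exact: (@SL3 _ _ _ _ _ _ (sigp i) (sigp l) (Cnz i) (Cnz l) (hl i)).
have trS : \tr Sigma = \tr W + \sum_j qf P (row j H)^T.
  by rewrite {1}hdare' mxtraceD tr_qf addrC.
have trH : \tr (H^T *m H) = \sum_j qf 1%:M (row j H)^T.
  by rewrite mxtrace_mulC -tr_qf mulmx1.
rewrite trS trH; split.
  rewrite lerD2l.
  have -> : sig u ^+ 2 * (\sum_j qf 1%:M (row j H)^T) * lam / (sig u ^+ 2 + lam * C u u ^+ 2)
     = \sum_j a * qf 1%:M (row j H)^T.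
    by rewrite -mulr_sumr /a; ring.
  by apply: ler_sum => j _; exact: lower.
rewrite lerD2l.
have -> : sig l ^+ 2 * (\sum_j qf 1%:M (row j H)^T) / C l l ^+ 2
   = \sum_j b * qf 1%:M (row j H)^T.
  by rewrite -mulr_sumr /b; ring.
by apply: ler_sum => j _; exact: upper.
Qed.
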